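(* Consider the fixed-share algorithm with time-varying parameters, with $\eta_t\le\eta_{t-1}$ for all $t\ge1$. Then for all $t\ge1$, all loss sequences in $[0,1]^d$, and all $q_t\in\Delta_d$, \[ (\hat p_t-q_t)^\top\ell_t\le\sum_{i=1}^dq_{i,t}\Big(\frac1{\eta_{t-1}}\ln\frac1{\hat p_{i,t}}-\frac1{\eta_t}\ln\frac1{v_{i,t+1}}\Big)+\Big(\frac1{\eta_t}-\frac1{\eta_{t-1}}\Big)\ln d+\frac{\eta_{t-1}}8. \]
   Context: Let $d\ge1$ and $\Delta_d=\{q\in[0,1]^d:\sum_{i=1}^d q_i=1\}$. The fixed-share algorithm with time-varying parameters uses sequences $(\eta_t)_{t\ge1}$ of positive numbers and $(\alpha_t)_{t\ge1}$ in $(0,1]$, with the convention $\eta_0=\eta_1$. It sets $\hat p_1=(1/d,\dots,1/d)$; at each round $t\ge1$ it predicts $\hat p_t\in\Delta_d$, observes an arbitrary loss vector $\ell_t=(\ell_{1,t},\dots,\ell_{d,t})\in[0,1]^d$, suffers loss $\hat p_t^\top\ell_t$, and then sets, for $j=1,\dots,d$, $v_{j,t+1}=\hat p_{j,t}^{\,\eta_t/\eta_{t-1}}e^{-\eta_t\ell_{j,t}}\big/\sum_{i=1}^d\hat p_{i,t}^{\,\eta_t/\eta_{t-1}}e^{-\eta_t\ell_{i,t}}$ and $\hat p_{j,t+1}=\alpha_t/d+(1-\alpha_t)v_{j,t+1}$. *)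

(* Defs.v *)
From Stdlib Require Import Reals Lra.
Open Scope R_scope.

(* rsum d f = f 0 + ... + f (d-1)  (experts are indexed 0..d-1) *)
Fixpoint rsum (d : nat) (f : nat -> R) : R :=
  match d with
  | O => 0
  | S n => rsum n f + f n
  end.

(* Rounds are indexed t >= 1; eta 0 plays the role of eta_0 (= eta_1 by hypothesis). *)
Definition fs_w (eta : nat -> R) (loss : nat -> nat -> R) (p : nat -> R)
  (t j : nat) : R :=
  Rpower (p j) (eta t / eta (t - 1)%nat) * exp (- eta t * loss t j).

(* v_{j,t+1} computed from p = p_hat_t *)
Definition fs_vstep (d : nat) (eta : nat -> R) (loss : nat -> nat -> R)
  (p : nat -> R) (t j : nat) : R :=
  fs_w eta loss p t j / rsum d (fun i => fs_w eta loss p t i).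

(* fs_p ... t = p_hat_t for t >= 1 (fs_p ... 0 is an unused dummy = uniform). *)
Fixpoint fs_p (d : nat) (eta alpha : nat -> R) (loss : nat -> nat -> R)
  (t : nat) : nat -> R :=
  match t with
  | O => fun _ => / INR d
  | S t' =>
      match t' with
      | O => fun _ => / INR d
      | S _ =>
          let p := fs_p d eta alpha loss t' in
          fun j => alpha t' / INR d + (1 - alpha t') * fs_vstep d eta loss p t' j
      end
  end.

(* fs_v ... t j = v_{j,t+1} *)
Definition fs_v (d : nat) (eta alpha : nat -> R) (loss : nat -> nat -> R)
  (t j : nat) : R :=
  fs_vstep d eta loss (fs_p d eta alpha loss t) t j.

(* Main.v *)
Require Import Defs.
From Stdlib Require Import Reals Lra Lia.
From Coquelicot Require Import Coquelicot.
Open Scope R_scope.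
Lemma D_pos m x : 0 <= m <= 1 -> 0 < 1 - m + m * exp x.
Proof. intros H. pose proof (exp_pos x).
  destruct (Req_dec m 0). subst; lra. assert (0 < m * exp x) by (apply Rmult_lt_0_compat; lra). lra. Qed.
Lemma hoeff m s : 0 <= m <= 1 -> s <= 0 ->
  ln (1 - m + m * exp s) <= s * m + s * s / 8.
Proof.
  intros Hm Hs.
  set (f := fun x => x * m + x * x / 8 - ln (1 - m + m * exp x)).
  set (g := fun x => m + x / 4 - m * exp x / (1 - m + m * exp x)).
  set (h := fun x => / 4 - m * (1 - m) * exp x / ((1 - m + m * exp x) * (1 - m + m * exp x))).
  assert (Df : forall x, is_derive f x (g x)).
  { intros x. pose proof (D_pos m x Hm). unfold f, g. auto_derive. lra. field. lra. }
  assert (Dg : forall x, is_derive g x (h x)).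
  { intros x. pose proof (D_pos m x Hm). unfold g, h. auto_derive. lra. field. lra. }
  assert (Hh : forall x, 0 <= h x).
  { intros x. pose proof (D_pos m x Hm). pose proof (exp_pos x). unfold h.
    pose proof (pow2_ge_0 (1 - m - m * exp x)).
    assert (E : / 4 - m * (1 - m) * exp x / ((1 - m + m * exp x) * (1 - m + m * exp x))
       = (1 - m - m * exp x)^2 / 4 * / ((1 - m + m * exp x) * (1 - m + m * exp x))) by (field; lra).
    rewrite E. apply Rmult_le_pos. lra. left. apply Rinv_0_lt_compat. nra. }
  assert (Hg : forall x, x <= 0 -> g x <= 0).
  { intros x Hx. destruct (Req_dec x 0). subst. unfold g. rewrite exp_0. field_simplify; lra.
    destruct (MVT_gen g x 0 h) as [c [Hc E]].
    { intros; apply Dg. }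
    { intros. apply continuity_pt_filterlim. apply (ex_derive_continuous (K:=R_AbsRing) (V:=R_NormedModule)). eexists; apply Dg. }
    assert (g 0 = 0). { unfold g. rewrite exp_0. field; lra. }
    specialize (Hh c). nra. }
  destruct (Req_dec s 0). subst. rewrite exp_0. replace (1 - m + m*1) with 1 by ring. rewrite ln_1. lra.
  destruct (MVT_gen f s 0 g) as [c [Hc E]].
  { intros; apply Df. }
  { intros. apply continuity_pt_filterlim. apply (ex_derive_continuous (K:=R_AbsRing) (V:=R_NormedModule)). eexists; apply Df. }
  assert (f 0 = 0). { unfold f. cbv beta. rewrite exp_0, Rmult_1_r. replace (1 - m + m) with 1 by ring. rewrite ln_1. lra. }
  rewrite Rmin_left, Rmax_right in Hc by lra.
  assert (g c <= 0) by (apply Hg; lra).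
  assert (f s >= 0) by nra. unfold f in *. lra.
Qed.

Lemma rsum_ext d f g : (forall i, (i < d)%nat -> f i = g i) -> rsum d f = rsum d g.
Proof. induction d; simpl; intros H; auto. rewrite IHd by (intros; apply H; lia). rewrite (H d) by lia. reflexivity. Qed.
Lemma rsum_le d f g : (forall i, (i < d)%nat -> f i <= g i) -> rsum d f <= rsum d g.
Proof. induction d; simpl; intros H. lra. assert (f d <= g d) by (apply H; lia).
  assert (rsum d f <= rsum d g) by (apply IHd; intros; apply H; lia). lra. Qed.
Lemma rsum_plus d f g : rsum d (fun i => f i + g i) = rsum d f + rsum d g.
Proof. induction d; simpl; [lra|]. rewrite IHd. ring. Qed.
Lemma rsum_minus d f g : rsum d (fun i => f i - g i) = rsum d f - rsum d g.
Proof. induction d; simpl; [lra|]. rewrite IHd. ring. Qed.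
Lemma rsum_scal d c f : rsum d (fun i => c * f i) = c * rsum d f.
Proof. induction d; simpl; [lra|]. rewrite IHd. ring. Qed.
Lemma rsum_const d c : rsum d (fun _ => c) = INR d * c.
Proof. induction d; simpl rsum; [simpl; lra|]. rewrite IHd, S_INR. ring. Qed.
Lemma rsum_nonneg d f : (forall i, (i < d)%nat -> 0 <= f i) -> 0 <= rsum d f.
Proof. induction d; simpl; intros H. lra. assert (0 <= f d) by (apply H; lia).
  assert (0 <= rsum d f) by (apply IHd; intros; apply H; lia). lra. Qed.
Lemma rsum_pos d f : (1 <= d)%nat -> (forall i, (i < d)%nat -> 0 < f i) -> 0 < rsum d f.
Proof. destruct d as [|d]. lia. intros _ H. simpl.
  assert (0 < f d) by (apply H; lia).
  assert (0 <= rsum d f) by (apply rsum_nonneg; intros; left; apply H; lia). lra. Qed.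

Lemma conv g A B : 0 <= g <= 1 -> exp (g * A + (1 - g) * B) <= g * exp A + (1 - g) * exp B.
Proof. intros Hg. set (m := g * A + (1 - g) * B).
  assert (EA : exp A = exp m * exp (A - m)) by (rewrite <- exp_plus; f_equal; ring).
  assert (EB : exp B = exp m * exp (B - m)) by (rewrite <- exp_plus; f_equal; ring).
  pose proof (exp_ineq1_le (A - m)). pose proof (exp_ineq1_le (B - m)). pose proof (exp_pos m).
  rewrite EA, EB.
  assert (g * exp (A - m) + (1 - g) * exp (B - m) >= 1).
  { assert (g * exp (A - m) >= g * (1 + (A - m))) by nra.
    assert ((1 - g) * exp (B - m) >= (1 - g) * (1 + (B - m))) by nra.
    unfold m in *. nra. }
  nra. Qed.

Lemma ln_le x y : 0 < x -> x <= y -> ln x <= ln y.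
Proof. intros Hx [H|H]. left; apply ln_increasing; auto. subst; lra. Qed.

Lemma w_pos eta loss p t j : 0 < fs_w eta loss p t j.
Proof. unfold fs_w, Rpower. apply Rmult_lt_0_compat; apply exp_pos. Qed.

Lemma vstep_pos d eta loss p t j : (1 <= d)%nat -> 0 < fs_vstep d eta loss p t j.
Proof. intros hd. unfold fs_vstep. apply Rdiv_lt_0_compat. apply w_pos.
  apply rsum_pos; auto. intros; apply w_pos. Qed.

Lemma vstep_sum d eta loss p t : (1 <= d)%nat -> rsum d (fs_vstep d eta loss p t) = 1.
Proof. intros hd. unfold fs_vstep.
  assert (0 < rsum d (fun i => fs_w eta loss p t i)) by (apply rsum_pos; auto; intros; apply w_pos).
  transitivity (rsum d (fun j => / rsum d (fun i => fs_w eta loss p t i) * fs_w eta loss p t j)).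
  apply rsum_ext; intros; unfold Rdiv; ring.
  rewrite rsum_scal. apply Rinv_l; apply Rgt_not_eq; exact H. Qed.

Lemma fs_p_SS d eta alpha loss t j :
  fs_p d eta alpha loss (S (S t)) j =
  alpha (S t) / INR d + (1 - alpha (S t)) * fs_vstep d eta loss (fs_p d eta alpha loss (S t)) (S t) j.
Proof. reflexivity. Qed.

Lemma fs_p_prop d eta alpha loss : (1 <= d)%nat ->
  (forall t, (1 <= t)%nat -> 0 < alpha t <= 1) ->
  forall t, (1 <= t)%nat ->
  (forall j, 0 < fs_p d eta alpha loss t j) /\ rsum d (fs_p d eta alpha loss t) = 1.
Proof. intros hd ha t ht.
  assert (Hd : 0 < INR d) by (apply lt_0_INR; lia).
  induction t as [|t IH]. lia.
  destruct t as [|t].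
  - simpl fs_p. split. intros; apply Rinv_0_lt_compat; auto.
    rewrite rsum_const. field. lra.
  - destruct IH as [_ _]; [lia|].
    specialize (ha (S t) ltac:(lia)).
    split.
    + intros j. rewrite fs_p_SS. pose proof (vstep_pos d eta loss (fs_p d eta alpha loss (S t)) (S t) j hd).
      assert (0 < alpha (S t) / INR d) by (apply Rdiv_lt_0_compat; lra).
      assert (0 <= (1 - alpha (S t)) * fs_vstep d eta loss (fs_p d eta alpha loss (S t)) (S t) j) by (apply Rmult_le_pos; lra).
      lra.
    + rewrite (rsum_ext d _ (fun j => alpha (S t) / INR d + (1 - alpha (S t)) * fs_vstep d eta loss (fs_p d eta alpha loss (S t)) (S t) j)) by (intros; apply fs_p_SS).
      rewrite rsum_plus, rsum_const, rsum_scal, vstep_sum by auto. field. lra.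
Qed.

Theorem mainTheorem12
  (d : nat) (hd : (1 <= d)%nat)
  (eta alpha : nat -> R) (loss : nat -> nat -> R)
  (heta_pos : forall t, (1 <= t)%nat -> 0 < eta t)
  (heta0 : eta 0%nat = eta 1%nat)
  (halpha : forall t, (1 <= t)%nat -> 0 < alpha t <= 1)
  (heta_dec : forall t, (1 <= t)%nat -> eta t <= eta (t - 1)%nat)
  (hloss : forall t j, (1 <= t)%nat -> (j < d)%nat -> 0 <= loss t j <= 1)
  (t : nat) (ht : (1 <= t)%nat)
  (q : nat -> R)
  (hq_nonneg : forall i, (i < d)%nat -> 0 <= q i)
  (hq_sum : rsum d q = 1) :
  rsum d (fun i => (fs_p d eta alpha loss t i - q i) * loss t i)
  <= rsum d (fun i => q i *
        (/ eta (t - 1)%nat * ln (1 / fs_p d eta alpha loss t i)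
         - / eta t * ln (1 / fs_v d eta alpha loss t i)))
     + (/ eta t - / eta (t - 1)%nat) * ln (INR d)
     + eta (t - 1)%nat / 8.
Proof.
  destruct (fs_p_prop d eta alpha loss hd halpha t ht) as [Hp Hps].
  unfold fs_v.
  set (p := fs_p d eta alpha loss t) in *.
  set (e := eta t). set (e1 := eta (t - 1)%nat).
  assert (He : 0 < e) by (apply heta_pos; auto).
  assert (He1 : 0 < e1).
  { unfold e1. destruct t as [|[|t]]. lia. simpl. rewrite heta0; apply heta_pos; lia.
    apply heta_pos; lia. }
  assert (Hee1 : e <= e1) by (apply heta_dec; auto).
  set (l := loss t). 
  assert (Hl : forall j, (j < d)%nat -> 0 <= l j <= 1) by (intros; apply hloss; auto).
  set (W := rsum d (fun i => fs_w eta loss p t i)).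
  assert (HW : 0 < W) by (apply rsum_pos; auto; intros; apply w_pos).
  set (g := e / e1).
  assert (Hg : 0 < g <= 1).
  { unfold g. split. apply Rdiv_lt_0_compat; lra.
    apply Rmult_le_reg_r with e1; auto. unfold Rdiv. rewrite Rmult_assoc, Rinv_l by lra. lra. }
  assert (Hterm : forall i, q i * (/ e1 * ln (1 / p i) - / e * ln (1 / fs_vstep d eta loss p t i))
                   = - (ln W * / e) * q i - q i * l i).
  { intros i. unfold fs_vstep. fold W.
    assert (Hw : 0 < fs_w eta loss p t i) by apply w_pos.
    replace (1 / (fs_w eta loss p t i / W)) with (W * / fs_w eta loss p t i) by (field; lra).
    rewrite ln_mult, ln_Rinv by (try apply Rinv_0_lt_compat; auto).
    unfold Rdiv. rewrite Rmult_1_l, ln_Rinv by auto.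
    unfold fs_w, Rpower. rewrite ln_mult, !ln_exp by apply exp_pos.
    fold e e1. unfold l.
    assert (E : e / e1 * ln (p i) = e * (/ e1 * ln (p i))) by (unfold Rdiv; ring).
    field. split; lra. }
  assert (ER : rsum d (fun i => q i * (/ e1 * ln (1 / p i) - / e * ln (1 / fs_vstep d eta loss p t i)))
     = - (ln W * / e) * 1 - rsum d (fun i => q i * l i)).
  { rewrite (rsum_ext d _ (fun i => - (ln W * / e) * q i - q i * l i)) by (intros; apply Hterm).
    rewrite rsum_minus, rsum_scal, hq_sum. reflexivity. }
  rewrite ER.
  assert (EL : rsum d (fun i => (p i - q i) * l i) = rsum d (fun i => p i * l i) - rsum d (fun i => q i * l i)).
  { rewrite <- rsum_minus. apply rsum_ext; intros; ring. }
  rewrite EL.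
  set (mu := rsum d (fun i => p i * l i)).
  assert (Hmu : 0 <= mu <= 1).
  { split. apply rsum_nonneg; intros; apply Rmult_le_pos; [left; apply Hp| apply Hl; auto].
    rewrite <- Hps. apply rsum_le. intros i Hi. specialize (Hl i Hi). specialize (Hp i). nra. }
  set (S := rsum d (fun j => p j * exp (- e1 * l j))).
  assert (HS : 0 < S) by (apply rsum_pos; auto; intros; apply Rmult_lt_0_compat; [apply Hp|apply exp_pos]).
  assert (Hd : 0 < INR d) by (apply lt_0_INR; lia).
  set (M := g * ln S + (1 - g) * ln (INR d)).
  assert (HWM : W <= exp M).
  { unfold W.
    apply Rle_trans with (rsum d (fun j => (g * (p j * exp (- e1 * l j) / S) + (1 - g) * / INR d) * exp M)).
    - apply rsum_le. intros j Hj.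
      assert (Hpe : 0 < p j * exp (- e1 * l j)) by (apply Rmult_lt_0_compat; [apply Hp|apply exp_pos]).
      assert (E : fs_w eta loss p t j = exp (g * ln (p j * exp (- e1 * l j) / S) + (1 - g) * ln (/ INR d)) * exp M).
      { unfold fs_w, Rpower. rewrite <- !exp_plus. f_equal.
        unfold Rdiv. rewrite ln_mult, ln_mult, ln_exp, !ln_Rinv by (try apply Rinv_0_lt_compat; first [assumption | apply Hp | apply exp_pos | auto]).
        unfold M, g, l, e, e1. field. unfold e1 in He1; lra. }
      rewrite E. apply Rmult_le_compat_r. left; apply exp_pos.
      pose proof (conv g (ln (p j * exp (- e1 * l j) / S)) (ln (/ INR d)) ltac:(lra)) as C.
      rewrite (exp_ln (p j * exp (- e1 * l j) / S)) in C by (apply Rdiv_lt_0_compat; auto).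
      rewrite (exp_ln (/ INR d)) in C by (apply Rinv_0_lt_compat; auto). exact C.
    - rewrite (rsum_ext d _ (fun j => (g * / S * exp M) * (p j * exp (- e1 * l j)) + (1 - g) * / INR d * exp M))
        by (intros; field; lra).
      rewrite rsum_plus, rsum_scal, rsum_const. fold S. right. field. lra. }
  assert (HlnW : ln W <= M).
  { rewrite <- (ln_exp M). apply ln_le; auto. }
  assert (HS2 : S <= 1 - mu + mu * exp (- e1)).
  { unfold S, mu.
    apply Rle_trans with (rsum d (fun j => p j * (l j * exp (- e1) + (1 - l j) * exp 0))).
    - apply rsum_le. intros j Hj. apply Rmult_le_compat_l. left; apply Hp.
      pose proof (conv (l j) (- e1) 0 (Hl j Hj)) as C.
      replace (l j * - e1 + (1 - l j) * 0) with (- e1 * l j) in C by ring. exact C.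
    - rewrite exp_0. right.
      rewrite (rsum_ext d _ (fun j => p j - (1 - exp (- e1)) * (p j * l j))) by (intros; ring).
      rewrite rsum_minus, rsum_scal, Hps. ring. }
  assert (HlnS : ln S <= - e1 * mu + e1 * e1 / 8).
  { apply Rle_trans with (ln (1 - mu + mu * exp (- e1))). apply ln_le; auto.
    pose proof (hoeff mu (- e1) Hmu ltac:(lra)). nra. }
  assert (E1 : M * / e = ln S * / e1 + (/ e - / e1) * ln (INR d)) by (unfold M, g; field; lra).
  assert (E2 : ln W * / e <= M * / e) by (apply Rmult_le_compat_r; [left; apply Rinv_0_lt_compat|]; auto).
  assert (E3 : ln S * / e1 <= - mu + e1 / 8).
  { apply Rmult_le_reg_r with e1; auto. rewrite Rmult_assoc, Rinv_l by lra. nra. }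
  lra.
Qed.
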